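(* Let $\psi\in\mathcal K$ have radius of convergence $R_\psi>0$ and Khinchin family $(Y_t)$, and for $t\in(0,R_\psi)$ let $q(t)$ be the extinction probability of the Galton–Watson process with offspring distribution $Y_t$. If $\lim_{t\uparrow R_\psi}\psi(t)/t=+\infty$, then $$q(t)\sim\frac{\psi(0)}{\psi(t)}\qquad\text{as }t\uparrow R_\psi.$$
   Context: $\mathcal K$ is the class of non-constant power series $f(z)=\sum_{n\ge0}a_nz^n$ with positive radius of convergence $R$, non-negative coefficients and $a_0>0$; its Khinchin family is given by $\mathbf P(X_t=n)=a_nt^n/f(t)$ for $n\ge0$, $t\in(0,R)$. The extinction probability is the probability that the Galton–Watson tree is finite. $a(t)\sim b(t)$ means $a(t)/b(t)\to1$. *)

(* Defs.v *)
From Stdlib Require Import Reals.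
From Coquelicot Require Import Coquelicot.
Open Scope R_scope.

Definition in_K (a : nat -> R) : Prop :=
  (forall n, 0 <= a n) /\ 0 < a 0%nat /\ (exists n, (1 <= n)%nat /\ 0 < a n) /\
  Rbar_lt (Finite 0) (CV_radius a).

(* Probability generating function of the Khinchin variable Y_t:
   E[s^{Y_t}] = sum_n (a_n t^n / psi(t)) s^n = psi(t s) / psi(t). *)
Definition khinchin_pgf (a : nat -> R) (t s : R) : R :=
  PSeries a (t * s) / PSeries a t.

(* Extinction probability of the Galton--Watson process with offspring
   distribution Y_t: q = lim_n P(Z_n = 0) = lim_n g^{(n)}(0), where g is the
   offspring pgf and g^{(n)} its n-th iterate. *)
Definition extinction_prob (a : nat -> R) (t : R) : R :=
  real (Lim_seq (fun n => Nat.iter n (khinchin_pgf a t) 0)).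

(* The filter "t tends to R from below" (t in (0,R)), R possibly +infinity. *)
Definition upto_radius (a : nat -> R) : (R -> Prop) -> Prop :=
  within (fun t => 0 < t /\ Rbar_lt (Finite t) (CV_radius a))
         (Rbar_locally (CV_radius a)).

(* Main.v *)
Require Import Defs.
From Stdlib Require Import Reals Lra Lia.
From Coquelicot Require Import Coquelicot.
Open Scope R_scope.

Lemma psi_mono (a : nat -> R) x y : (forall n, 0 <= a n) -> 0 <= x <= y ->
  Rbar_lt (Finite y) (CV_radius a) -> PSeries a x <= PSeries a y.
Proof.
  intros Ha Hxy Hy. unfold PSeries.
  apply Series_le.
  - intros n. change (scal (x^n) (a n)) with (x^n * a n).
    change (scal (y^n) (a n)) with (y^n * a n). split.
    + apply Rmult_le_pos; [apply Ha | apply pow_le; lra].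
    + assert (x^n <= y^n) by (apply pow_incr; lra). specialize (Ha n). nra.
  - eapply ex_series_ext; [|apply (CV_radius_inside a y)]. { intros n. simpl. change (scal (pow_n y n) (a n)) with (pow_n y n * a n). rewrite Rmult_comm. f_equal. } rewrite Rabs_pos_eq; [exact Hy | lra].
Qed.

Lemma rad_pt (R0 : Rbar) : Rbar_lt (Finite 0) R0 -> exists r, 0 < r /\ Rbar_lt (Finite r) R0.
Proof.
  destruct R0 as [r| |]; simpl; intros H.
  - exists (r/2). simpl. lra.
  - exists 1. simpl. lra.
  - contradiction.
Qed.

Lemma iter_S {A} (f : A -> A) n x : Nat.iter (S n) f x = f (Nat.iter n f x).
Proof. reflexivity. Qed.

Theorem proposition6p6 (a : nat -> R) :
  in_K a ->
  filterlim (fun t => PSeries a t / t) (upto_radius a) (Rbar_locally p_infty) ->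
  filterlim (fun t => extinction_prob a t / (PSeries a 0 / PSeries a t))
            (upto_radius a) (locally 1).
Proof.
  intros [Hpos [Ha0 [_ HR]]] Hlim.
  set (psi := PSeries a).
  assert (Hpsi0 : psi 0 = a 0%nat) by apply PSeries_0.
  assert (Hcont : filterlim psi (locally 0) (locally (psi 0))).
  { apply continuity_pt_filterlim. apply PSeries_continuity.
    rewrite Rabs_R0. exact HR. }
  unfold upto_radius in *.
  apply filterlim_locally. intros eps.
  assert (He : 0 < eps * a 0%nat) by (apply Rmult_lt_0_compat; [apply cond_pos | exact Ha0]).
  apply filterlim_locally with (eps := mkposreal _ He) in Hcont.
  destruct Hcont as [d Hd].
  destruct (rad_pt _ HR) as [r [Hr0 Hr]].
  set (del := Rmin (d/2) r).
  assert (Hdel0 : 0 < del).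
  { unfold del. apply Rmin_glb_lt; [pose proof (cond_pos d); lra | lra]. }
  assert (HdelR : Rbar_lt (Finite del) (CV_radius a)).
  { eapply Rbar_le_lt_trans; [| exact Hr]. simpl. apply Rmin_r. }
  assert (Hdeld : psi del - psi 0 < eps * a 0%nat).
  { assert (B := Hd del). 
    assert (Hb : ball 0 d del).
    { change (Rabs (del - 0) < d). rewrite Rabs_pos_eq by lra.
      pose proof (Rmin_l (d/2) r). pose proof (cond_pos d). fold del in H. lra. }
    specialize (B Hb). change (Rabs (psi del - psi 0) < eps * a 0%nat) in B.
    apply Rabs_lt_between in B. lra. }
  assert (F1 : within (fun t => 0 < t /\ Rbar_lt (Finite t) (CV_radius a))
                 (Rbar_locally (CV_radius a)) (fun t => Rbar_lt (Finite del) (Finite t))).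
  { apply filter_imp with (2 := open_Rbar_gt' _ _ HdelR). intros x Hx _. exact Hx. }
  assert (F2 : within (fun t => 0 < t /\ Rbar_lt (Finite t) (CV_radius a))
                 (Rbar_locally (CV_radius a)) (fun t => psi del / del < psi t / t)).
  { unfold filterlim, filter_le, filtermap in Hlim. apply (Hlim (fun y => psi del / del < y)). exists (psi del / del). auto. }
  assert (F3 : within (fun t => 0 < t /\ Rbar_lt (Finite t) (CV_radius a))
                 (Rbar_locally (CV_radius a)) (fun t => 0 < t /\ Rbar_lt (Finite t) (CV_radius a))).
  { unfold within. apply filter_forall. auto. }
  generalize (filter_and _ _ F1 (filter_and _ _ F2 F3)).
  apply filter_imp. intros t [Ht1 [Ht2 [Ht0 HtR]]]. simpl in Ht1.
  assert (Hmono : forall x y, 0 <= x <= y -> Rbar_lt (Finite y) (CV_radius a) -> psi x <= psi y).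
  { intros x y Hxy Hy. apply psi_mono; auto. }
  assert (Hpt : a 0%nat <= psi t).
  { rewrite <- Hpsi0. apply Hmono; auto. lra. }
  assert (HPt : 0 < psi t) by lra.
  assert (Hcmp : psi del * t <= del * psi t).
  { apply Rmult_lt_compat_r with (r := del * t) in Ht2; [|nra].
    replace (psi del / del * (del * t)) with (psi del * t) in Ht2 by (field; lra).
    replace (psi t / t * (del * t)) with (del * psi t) in Ht2 by (field; lra). lra. }
  set (x := fun n => Nat.iter n (khinchin_pgf a t) 0).
  assert (Hx : forall n, 0 <= x n <= del / t).
  { induction n.
    - simpl. split; [lra|]. apply Rlt_le, Rdiv_lt_0_compat; lra.
    - unfold x. rewrite iter_S. fold (x n). unfold khinchin_pgf. fold psi.
      assert (Htx : 0 <= t * x n <= del).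
      { split; [nra|]. destruct IHn as [_ IHn].
        apply Rmult_le_compat_l with (r := t) in IHn; [|lra].
        replace (t * (del / t)) with del in IHn by (field; lra). exact IHn. }
      assert (A1 : a 0%nat <= psi (t * x n)).
      { rewrite <- Hpsi0. apply Hmono; [lra|]. eapply Rbar_le_lt_trans; [|exact HdelR]. simpl; lra. }
      assert (A2 : psi (t * x n) <= psi del) by (apply Hmono; auto; lra).
      split.
      + apply Rmult_le_pos; [lra | apply Rlt_le, Rinv_0_lt_compat; lra].
      + apply Rmult_le_reg_r with (r := t * psi t); [nra|].
        replace (psi (t * x n) / psi t * (t * psi t)) with (psi (t * x n) * t) by (field; lra).
        replace (del / t * (t * psi t)) with (del * psi t) by (field; lra). nra. }
  assert (Hx2 : forall n, a 0%nat / psi t <= x (S n) <= psi del / psi t).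
  { intros n. unfold x. rewrite iter_S. fold (x n). unfold khinchin_pgf. fold psi.
    destruct (Hx n) as [Hx1 Hx2].
    assert (Htx : 0 <= t * x n <= del).
    { split; [nra|].
      apply Rmult_le_compat_l with (r := t) in Hx2; [|lra].
      replace (t * (del / t)) with del in Hx2 by (field; lra). exact Hx2. }
    assert (A1 : a 0%nat <= psi (t * x n)).
    { rewrite <- Hpsi0. apply Hmono; [lra|]. eapply Rbar_le_lt_trans; [|exact HdelR]. simpl; lra. }
    assert (A2 : psi (t * x n) <= psi del) by (apply Hmono; auto; lra).
    split; apply Rmult_le_compat_r; try (apply Rlt_le, Rinv_0_lt_compat; lra); lra. }
  assert (L1 : Rbar_le (Finite (a 0%nat / psi t)) (Lim_seq x)).
  { rewrite <- (Lim_seq_const (a 0%nat / psi t)). apply Lim_seq_le_loc.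
    exists 1%nat. intros n Hn. destruct n; [lia|]. apply Hx2. }
  assert (L2 : Rbar_le (Lim_seq x) (Finite (psi del / psi t))).
  { rewrite <- (Lim_seq_const (psi del / psi t)). apply Lim_seq_le_loc.
    exists 1%nat. intros n Hn. destruct n; [lia|]. apply Hx2. }
  unfold extinction_prob. fold psi. fold x.
  destruct (Lim_seq x) as [q| |]; simpl in L1, L2; try contradiction.
  simpl real.
  change (Rabs (q / (psi 0 / psi t) - 1) < eps).
  rewrite Hpsi0.
  replace (q / (a 0%nat / psi t)) with (q * psi t / a 0%nat) by (field; lra).
  assert (Q1 : a 0%nat <= q * psi t).
  { apply Rmult_le_compat_r with (r := psi t) in L1; [|lra].
    replace (a 0%nat / psi t * psi t) with (a 0%nat) in L1 by (field; lra). exact L1. }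
  assert (Q2 : q * psi t <= psi del).
  { apply Rmult_le_compat_r with (r := psi t) in L2; [|lra].
    replace (psi del / psi t * psi t) with (psi del) in L2 by (field; lra). exact L2. }
  apply Rabs_def1.
  - apply Rmult_lt_reg_r with (r := a 0%nat); [lra|].
    replace ((q * psi t / a 0%nat - 1) * a 0%nat) with (q * psi t - a 0%nat) by (field; lra).
    rewrite Hpsi0 in Hdeld. lra.
  - apply Rmult_lt_reg_r with (r := a 0%nat); [lra|].
    replace ((q * psi t / a 0%nat - 1) * a 0%nat) with (q * psi t - a 0%nat) by (field; lra).
    pose proof (cond_pos eps). nra.
Qed.
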